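(* Let $A$ be a real $m \times N$ matrix and let $h$ be a positive integer. Suppose that for every index set $H \subseteq \{1,\dots,N\}$ with $|H| \le h$, the $m \times |H|$ submatrix $A_H$ formed by the columns of $A$ indexed by $H$ has at least one row containing exactly one nonzero entry. Then every vector $\mathbf{x}\in\mathbb{R}^N$ with at most $k$ nonzero entries, where $k < \frac{h+1}{2}$, is the unique sparsest vector $\tilde{\mathbf{x}}$ satisfying $A\tilde{\mathbf{x}} = A\mathbf{x}$.
   Context: ''Sparsest'' means having the fewest nonzero entries. *)

(* Defs.v *)
From mathcomp Require Import all_boot all_order all_algebra.
From mathcomp Require Import reals.
Set Implicit Arguments. Unset Strict Implicit. Unset Printing Implicit Defensive.
Import Order.TTheory GRing.Theory Num.Theory.
Local Open Scope ring_scope.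

Definition nnz (R : ringType) (N : nat) (x : 'cV[R]_N) : nat :=
  #|[set i : 'I_N | x i 0 != 0]|.

Definition has_singleton_row (R : ringType) (m N : nat) (A : 'M[R]_(m, N))
    (H : {set 'I_N}) : Prop :=
  exists j : 'I_m, #|[set i in H | A j i != 0]| = 1%N.

Definition unique_sparsest (R : ringType) (m N : nat) (A : 'M[R]_(m, N))
    (x : 'cV[R]_N) : Prop :=
  forall y : 'cV[R]_N, A *m y = A *m x -> (nnz y <= nnz x)%N -> y = x.

(* Main.v *)
Require Import Defs.
From mathcomp Require Import all_boot all_order all_algebra.
From mathcomp Require Import reals.
Local Open Scope ring_scope.
Import Order.TTheory GRing.Theory Num.Theory.

Theorem theorem3 (R : realType) (m N h k : nat) (A : 'M[R]_(m, N)) :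
  (0 < h)%N ->
  (forall H : {set 'I_N}, (0 < #|H|)%N -> (#|H| <= h)%N -> has_singleton_row A H) ->
  (k.*2 < h.+1)%N ->
  forall x : 'cV[R]_N, (nnz x <= k)%N -> unique_sparsest A x.
Proof.
move=> _ hyp hk x hx y hA hy.
apply/eqP; rewrite -subr_eq0; apply/eqP.
set z := y - x.
have Az : A *m z = 0 by rewrite /z mulmxBr hA subrr.
set H := [set i : 'I_N | z i 0 != 0].
have sub : H \subset [set i : 'I_N | y i 0 != 0] :|: [set i : 'I_N | x i 0 != 0].
  apply/subsetP => i; rewrite !inE /z !mxE.
  case: (eqVneq (y i 0) 0) => [->|//]; case: (eqVneq (x i 0) 0) => [->|//].
  by rewrite subrr eqxx.
have cH : (#|H| <= h)%N.
  apply: leq_trans (subset_leq_card sub) _.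
  apply: leq_trans (leq_card_setU _ _) _.
  rewrite /nnz in hx hy. rewrite -ltnS; apply: leq_trans hk.
  rewrite ltnS -addnn; apply: leq_add => //; exact: leq_trans hy hx.
case: (posnP #|H|) => [H0|Hpos].
  apply/matrixP => i j; rewrite (ord1 j) mxE; apply/eqP.
  have: i \notin H by rewrite (cards0_eq H0) inE.
  by rewrite /H /z inE !mxE; case: eqP.
have [j /eqP/cards1P [i0 Hi0]] := hyp H Hpos cH.
have i0in : i0 \in [set i in H | A j i != 0] by rewrite Hi0 set11.
move: i0in; rewrite !inE => /andP [zi0 Aji0].
have : (A *m z) j 0 = A j i0 * z i0 0.
  rewrite mxE (bigD1 i0) //= big1 ?addr0 // => i ni.
  case: (eqVneq (z i 0) 0) => [->|nz]; first by rewrite mulr0.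
  case: (eqVneq (A j i) 0) => [->|nA]; first by rewrite mul0r.
  have : i \in [set i in H | A j i != 0] by rewrite !inE nz nA.
  by rewrite Hi0 inE (negbTE ni).
rewrite Az mxE => /esym /eqP; rewrite mulf_eq0 (negbTE Aji0) (negbTE zi0) //.
Qed.
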